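(* Fix $\mathbf{x} \in \Omega$ and $\alpha \in [0,1)$, and let $C = \{s \in S : s = x_k \text{ for some } k \in \{1,\dots,n\}\}$ be the set of values occurring in $\mathbf{x}$. Then $$B_{T_\ell}^*(\mathbf{x}) = \min\{E[F] : F \in \mathcal{F}_{C^+}(\Omega(\mathbf{x},T_\ell),\alpha)\}.$$
   Context: Fix integers $m \ge 2$, $n \ge 1$ and reals $S_{\min} < S_{\max}$; $S = \{S_0,\dots,S_{m-1}\}$ with $S_k = S_{\min} + k\frac{S_{\max}-S_{\min}}{m-1}$. $\mathcal{F}$ is the set of probability distributions on $S$, identified with the probability simplex in $\mathbb{R}^m$ with the Euclidean topology; $E[F]$ is the mean. $\Omega$ is the set of samples of size $n$ from $S$, identified with their sorted versions $x_{(1)} \le \dots \le x_{(n)}$. $P_F[\Omega']$ is the probability that the sorted sample of $n$ i.i.d. draws from $F$ lies in $\Omega' \subseteq \Omega$; $\mathcal{G}(\Omega',\alpha) = \{F : P_F[\Omega'] > \alpha\}$ and $\mathcal{F}(\Omega',\alpha)$ is its closure. The low lexicographic order $T_\ell$: $\mathbf{x} \le_{T_\ell} \mathbf{y}$ iff $\mathbf{x}=\mathbf{y}$ or at the smallest index $j$ with $x_{(j)} \ne y_{(j)}$ we have $x_{(j)} < y_{(j)}$; $\Omega(\mathbf{x},T_\ell) = \{\mathbf{y} : \mathbf{x} \le_{T_\ell} \mathbf{y}\}$; $B_{T_\ell}^*(\mathbf{x}) = \min\{E[F] : F \in \mathcal{F}(\Omega(\mathbf{x},T_\ell),\alpha)\}$.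 For $C \subseteq S$: $\mathcal{F}_C = \{F \in \mathcal{F} : P_F[X = s] = 0 \ \forall s \in S\setminus C\}$, $\mathcal{G}_C(\Omega',\alpha) = \mathcal{F}_C \cap \mathcal{G}(\Omega',\alpha)$, $\mathcal{F}_C(\Omega',\alpha)$ is the closure of $\mathcal{G}_C(\Omega',\alpha)$, and $C^+ = C \cup \{S_{\min}\} \cup \{S_{j+1} : S_j \in C,\ j \le m-2\}$. *)

(* Defs.v *)
From HB Require Import structures.
From mathcomp Require Import all_boot all_order all_algebra.
From mathcomp Require Import all_classical all_reals.
From mathcomp Require Import topology normedtype.
Set Implicit Arguments. Unset Strict Implicit. Unset Printing Implicit Defensive.
Import Order.TTheory GRing.Theory Num.Theory.
Import numFieldNormedType.Exports.
Local Open Scope classical_set_scope.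
Local Open Scope ring_scope.

Section Defs.
Variable R : realType.
Variable m : nat.

Definition Sval (Smin Smax : R) (k : 'I_m) : R :=
  Smin + k%:R * ((Smax - Smin) / (m.-1)%:R).

(* Distributions on S = points of the probability simplex in R^m
   (row vectors; entry k is P_F[X = S_k]). *)
Definition simplex : set 'rV[R]_m :=
  [set F | (forall k, 0 <= F ord0 k) /\ \sum_k F ord0 k = 1].

Variable Sv : 'I_m -> R.

Definition Expect (F : 'rV[R]_m) : R := \sum_k F ord0 k * Sv k.

Definition valle (a b : 'I_m) : bool := Sv a <= Sv b.
Definition sortS (t : seq 'I_m) : seq 'I_m := sort valle t.

Definition Omega (n : nat) : pred (seq 'I_m) :=
  [pred y | (size y == n) && sorted valle y].

(* P_F[Omega'] : probability that the sorted sample of n iid draws lies in Omega' *)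
Definition prob (n : nat) (F : 'rV[R]_m) (Om' : pred (seq 'I_m)) : R :=
  \sum_(t : n.-tuple 'I_m | Om' (sortS t)) \prod_(i < n) F ord0 (tnth t i).

Fixpoint lexle (x y : seq 'I_m) : bool :=
  match x, y with
  | a :: x', b :: y' => if Sv a == Sv b then lexle x' y' else Sv a < Sv b
  | _, _ => true
  end.

Definition OmegaT (n : nat) (x : seq 'I_m) : pred (seq 'I_m) :=
  [pred y | Omega n y && lexle x y].

Definition Gset (n : nat) (Om' : pred (seq 'I_m)) (alpha : R) : set 'rV[R]_m :=
  [set F | simplex F /\ alpha < prob n F Om'].

(* closure within the simplex (subspace topology of the Euclidean topology) *)
Definition Fset (n : nat) (Om' : pred (seq 'I_m)) (alpha : R) : set 'rV[R]_m :=
  closure (Gset n Om' alpha) `&` simplex.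

Definition FC (C : pred 'I_m) : set 'rV[R]_m :=
  [set F | simplex F /\ forall k, ~~ C k -> F ord0 k = 0].

Definition GCset (C : pred 'I_m) (n : nat) (Om' : pred (seq 'I_m)) (alpha : R) :=
  FC C `&` Gset n Om' alpha.

Definition FCset (C : pred 'I_m) (n : nat) (Om' : pred (seq 'I_m)) (alpha : R) :=
  closure (GCset C n Om' alpha) `&` simplex.

Definition Cof (x : seq 'I_m) : pred 'I_m :=
  [pred k | has (fun a => Sv a == Sv k) x].

Definition Cplus (C : pred 'I_m) : pred 'I_m :=
  [pred k | [|| C k, val k == 0%N | [exists j : 'I_m, C j && ((val j).+1 == val k)]]].

End Defs.

Definition is_min (R : realType) (A : set R) (v : R) : Prop :=
  A v /\ (forall w, A w -> v <= w).

(* Main.v *)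
Require Import Defs.
From HB Require Import structures.
From mathcomp Require Import all_boot all_order all_algebra.
From mathcomp Require Import all_classical all_reals.
From mathcomp Require Import topology normedtype derive.
Import Order.TTheory GRing.Theory Num.Theory.
Import numFieldNormedType.Exports.
Local Open Scope classical_set_scope.
Local Open Scope ring_scope.
Set Implicit Arguments. Unset Strict Implicit. Unset Printing Implicit Defensive.
Section Topo.
Variable R : realType.

Lemma lip_cont (V W : pseudoMetricNormedZmodType R) (f : V -> W) (K : R) :
  0 < K -> (forall x y, `|f x - f y| <= K * `|x - y|) -> continuous f.
Proof.
move=> K0 Hf x; apply/cvgrPdist_lt => e e0.
have eK : 0 < e / K by rewrite divr_gt0.
near=> y.
apply: (le_lt_trans (Hf x y)).
rewrite -ltr_pdivlMl // mulrC.
near: y.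
by apply: cvgr_dist_lt => //; exact: cvg_id.
Unshelve. all: by end_near. Qed.

Lemma coord_le a b (M : 'M[R]_(a, b)) i j : `|M i j| <= `|M|.
Proof.
rewrite [leRHS]/Num.norm /= mx_normrE; apply/bigmax_geP; right => /=; by exists (i, j).
Qed.

Lemma mx_le a b (M : 'M[R]_(a, b)) c : 0 <= c -> (forall i j, `|M i j| <= c) -> `|M| <= c.
Proof.
move=> c0 H; rewrite [leLHS]/Num.norm /= mx_normrE; apply/bigmax_leP; split => //.
Qed.

Lemma closure_img (T U : topologicalType) (f : T -> U) (A : set T) p :
  continuous f -> closure A p -> closure (f @` A) (f p).
Proof.
move=> fc Ap B /fc nB.
have [q [Aq Bq]] := Ap _ nB.
by exists (f q); split => //; exists q.
Qed.

End Topo.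

Section Comb.
Variable R : realType.
Variables (m : nat) (Smin Smax : R).
Hypothesis hm : (2 <= m)%N.
Hypothesis hS : Smin < Smax.
Local Notation Sv := (Sval (m:=m) Smin Smax).

Lemma Sv_lt (a b : 'I_m) : (Sv a < Sv b) = (a < b)%N.
Proof.
rewrite /Sval ltrD2l ltr_pM2r ?ltr_nat //.
apply: divr_gt0; first by rewrite subr_gt0.
by rewrite ltr0n; case: m hm => [|[|k]].
Qed.

Lemma Sv_le (a b : 'I_m) : (Sv a <= Sv b) = (a <= b)%N.
Proof. by rewrite leNgt Sv_lt ltnNge negbK. Qed.

Lemma Sv_eq (a b : 'I_m) : (Sv a == Sv b) = (a == b).
Proof.
by rewrite eq_le !Sv_le -eqn_leq.
Qed.

Lemma lexle_map (f : 'I_m -> 'I_m) (x y : seq 'I_m) :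
  (forall a b, a \in x -> (Sv a == Sv (f b)) = (Sv a == Sv b) /\ (Sv a < Sv (f b)) = (Sv a < Sv b)) ->
  lexle Sv x (map f y) = lexle Sv x y.
Proof.
elim: x y => [|a x IH] [|b y] //= H.
have [-> ->] := H a b (mem_head _ _).
rewrite IH // => a' b' Ha'; apply: H; by rewrite in_cons Ha' orbT.
Qed.

Lemma valle_trans : transitive (valle Sv).
Proof. by move=> b a c; rewrite /valle; apply: le_trans. Qed.
Lemma valle_total : total (valle Sv).
Proof. by move=> a b; rewrite /valle le_total. Qed.
Lemma valle_anti : antisymmetric (valle Sv).
Proof. by move=> a b; rewrite /valle !Sv_le -eqn_leq => /eqP /val_inj. Qed.

Lemma sortS_map (f : 'I_m -> 'I_m) (s : seq 'I_m) :
  {homo f : a b / (a <= b)%N} ->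
  sortS Sv (map f s) = map f (sortS Sv s).
Proof.
move=> fh; rewrite /sortS; apply: (sorted_eq valle_trans valle_anti).
- apply: sort_sorted; exact: valle_total.
- apply: (homo_sorted (e := valle Sv)); last by apply: sort_sorted; exact: valle_total.
  by move=> a b; rewrite /valle !Sv_le; apply: fh.
- by rewrite perm_sort perm_map // perm_sym perm_sort.
Qed.

Lemma Omega_sortS n (t : n.-tuple 'I_m) : Omega Sv n (sortS Sv t).
Proof.
by rewrite /Omega inE /sortS size_sort size_tuple eqxx sort_sorted //; exact: valle_total.
Qed.


Variable C : pred 'I_m.

Definition z0 : 'I_m := Ordinal (leq_trans (isT : (1 <= 2)%N) hm).

Definition phin (b : 'I_m) : nat := \max_(k : 'I_m | (k <= b)%N && Cplus C k) val k.

Lemma phin_le (b : 'I_m) : (phin b <= b)%N.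
Proof. by apply/bigmax_leqP => k /andP[]. Qed.

Lemma phin_ge (b : 'I_m) (k : 'I_m) : (k <= b)%N -> Cplus C k -> (k <= phin b)%N.
Proof. by move=> kb ck; rewrite /phin; apply: (@leq_bigmax_cond _ _ (fun k : 'I_m => val k) k); rewrite kb. Qed.

Lemma phi_lt (b : 'I_m) : (phin b < m)%N.
Proof. exact: leq_ltn_trans (phin_le b) (ltn_ord b). Qed.

Definition phi (b : 'I_m) : 'I_m := Ordinal (phi_lt b).

Lemma phi_le (b : 'I_m) : (phi b <= b)%N.
Proof. exact: phin_le. Qed.

Lemma phi_C (b : 'I_m) : Cplus C (phi b).
Proof.
have ne : (0 < #|[pred k : 'I_m | (k <= b)%N && Cplus C k]|)%N.
  apply/card_gt0P; exists z0; rewrite inE /= /Cplus inE /=.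
  by rewrite orbT.
have [i0 Hi0 Heq] := eq_bigmax_cond (fun k : 'I_m => val k) ne.
have -> : phi b = i0 by apply: val_inj; rewrite /= /phin -Heq.
by move: Hi0; rewrite inE => /andP[].
Qed.

Lemma phi_homo : {homo phi : a b / (a <= b)%N}.
Proof.
move=> a b ab; apply/bigmax_leqP => k /andP[ka ck].
by apply: phin_ge => //; apply: leq_trans ab.
Qed.

Lemma phi_cmp (c b : 'I_m) : C c -> (c == phi b) = (c == b) /\ (c < phi b)%N = (c < b)%N.
Proof.
move=> Cc.
have [cb|bc|cb] := ltngtP c b.
- have c1 : (c.+1 < m)%N by apply: leq_ltn_trans cb (ltn_ord b).
  have : (Ordinal c1 <= phin b)%N.
    apply: phin_ge => //=.
    rewrite /Cplus inE /=; apply/orP; right.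
    by apply/existsP; exists c; rewrite Cc eqxx.
  move=> /= h.
  have h' : (c < phi b)%N := h.
  have ne1 : c != phi b by rewrite -(inj_eq val_inj) /= neq_ltn h'.
  have ne2 : c != b by rewrite -(inj_eq val_inj) /= neq_ltn cb.
  by rewrite h' (negbTE ne1) (negbTE ne2).
- have h := phi_le b.
  have h' : (phi b < c)%N by apply: leq_ltn_trans h bc.
  have ne1 : c != phi b by rewrite -(inj_eq val_inj) /= neq_ltn h' orbT.
  have ne2 : c != b by rewrite -(inj_eq val_inj) /= neq_ltn bc orbT.
  by rewrite (negbTE ne1) (negbTE ne2) ltnNge ltnW.
- have ebc : c = b := val_inj cb.
  rewrite -ebc.
  have e : phi c = c.
    apply: val_inj => /=; apply/eqP; rewrite eqn_leq phin_le /=.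
    by apply: phin_ge; rewrite ?leqnn // /Cplus inE Cc.
  by rewrite e eqxx ltnn.
Qed.


Definition push (F : 'rV[R]_m) : 'rV[R]_m := \row_k \sum_(j | phi j == k) F ord0 j.

Lemma sum_push (G : 'I_m -> R) : \sum_k \sum_(j | phi j == k) G j = \sum_j G j.
Proof. by rewrite [RHS](partition_big phi xpredT). Qed.

Lemma push_simplex F : simplex F -> simplex (push F).
Proof.
move=> [F0 F1]; split.
  by move=> k; rewrite /push mxE; apply: sumr_ge0 => j _; exact: F0.
by rewrite -F1 -(sum_push (fun j => F ord0 j)); apply: eq_bigr => k _; rewrite /push mxE.
Qed.

Lemma push_FC F : simplex F -> FC (Cplus C) (push F).
Proof.
move=> sF; split; first exact: push_simplex.
move=> k nk; rewrite /push mxE big1 // => j /eqP e.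
by move: nk; rewrite -e phi_C.
Qed.

Lemma push_E F : simplex F -> Expect Sv (push F) <= Expect Sv F.
Proof.
move=> [F0 _]; rewrite /Expect.
have -> : \sum_k push F ord0 k * Sv k = \sum_j F ord0 j * Sv (phi j).
  rewrite -(sum_push (fun j => F ord0 j * Sv (phi j))); apply: eq_bigr => k _.
  rewrite /push mxE mulr_suml; apply: eq_bigr => j /eqP ->; done.
apply: ler_sum => j _; apply: ler_wpM2l => //.
by rewrite Sv_le phi_le.
Qed.

Lemma push_prod n (t : n.-tuple 'I_m) F :
  \prod_(i < n) push F ord0 (tnth t i) =
  \sum_(u : n.-tuple 'I_m | map_tuple phi u == t) \prod_(i < n) F ord0 (tnth u i).
Proof.
under eq_bigr do rewrite mxE big_mkcond /=.
rewrite bigA_distr_bigA /=.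
rewrite (reindex (fun u : n.-tuple 'I_m => [ffun i => tnth u i])) /=; last first.
  exists (fun f : {ffun 'I_n -> 'I_m} => [tuple f i | i < n]) => [u _|f _].
    by apply: eq_from_tnth => i; rewrite tnth_mktuple ffunE.
  by apply/ffunP => i; rewrite !ffunE tnth_mktuple.
rewrite [RHS]big_mkcond /=; apply: eq_bigr => u _.
under eq_bigr do rewrite ffunE.
case: eqP => [<-|ne].
  by apply: eq_bigr => i _; rewrite tnth_map eqxx.
have [i hi] : exists i, phi (tnth u i) != tnth t i.
  apply/existsP; apply: contraT; rewrite negb_exists => /forallP H.
  exfalso; apply: ne; apply: eq_from_tnth => i.
  by rewrite tnth_map; apply/eqP; move: (H i); rewrite negbK.
by rewrite (bigD1 i) //= (negbTE hi) mul0r.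
Qed.

Lemma push_sumQ n (Q : pred (n.-tuple 'I_m)) F :
  (forall u, Q (map_tuple phi u) = Q u) ->
  \sum_(t | Q t) \prod_(i < n) push F ord0 (tnth t i) =
  \sum_(t | Q t) \prod_(i < n) F ord0 (tnth t i).
Proof.
move=> HQ.
rewrite [RHS](partition_big (fun u => map_tuple phi u) Q) => [|u]; last by rewrite HQ.
apply: eq_bigr => t Qt; rewrite push_prod; apply: eq_bigl => u.
case: eqP => [e|]; last by rewrite andbF.
by rewrite -HQ e Qt.
Qed.

Lemma push_prob n (Om' : pred (seq 'I_m)) F :
  (forall u : n.-tuple 'I_m, Om' (sortS Sv (map_tuple phi u)) = Om' (sortS Sv u)) ->
  prob Sv n (push F) Om' = prob Sv n F Om'.
Proof. by move=> H; apply: (push_sumQ (Q := fun t => Om' (sortS Sv t))). Qed.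

End Comb.

Section Cont.
Variable R : realType.
Variable m : nat.

Lemma lin_cont (w : 'I_m -> R) : continuous (fun F : 'rV[R]_m => \sum_k F ord0 k * w k).
Proof.
apply: (@lip_cont R _ _ _ (1 + \sum_k `|w k|)) => [|F G].
  by rewrite (lt_le_trans ltr01) // lerDl sumr_ge0.
rewrite -sumrB; under eq_bigr do rewrite -mulrBl.
apply: (le_trans (ler_norm_sum _ _ _)).
apply: (@le_trans _ _ (\sum_k `|F - G| * `|w k|)).
  apply: ler_sum => k _; rewrite normrM ler_wpM2r //.
  by have := coord_le (F - G) ord0 k; rewrite !mxE.
by rewrite -mulr_sumr mulrC ler_wpM2r // lerDr.
Qed.

Lemma push_cont (C : pred 'I_m) : continuous (@push R m C).
Proof.
apply: (@lip_cont R _ _ _ (m%:R + 1)) => [|F G].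
  by rewrite ltr_wpDl.
apply: mx_le; first by rewrite mulr_ge0 // addr_ge0.
move=> i j; rewrite !mxE -sumrB.
apply: (le_trans (ler_norm_sum _ _ _)).
apply: (@le_trans _ _ (\sum_(j' | phi C j' == j) `|F - G|)).
  by apply: ler_sum => k _; have := coord_le (F - G) ord0 k; rewrite !mxE.
rewrite big_mkcond /=; apply: (@le_trans _ _ (\sum_(k : 'I_m) `|F - G|)).
  by apply: ler_sum => k _; case: ifP.
by rewrite sumr_const card_ord -[X in X <= _]mulr_natl ler_wpM2r // lerDl.
Qed.

End Cont.

Unset Implicit Arguments.

Theorem theorem7 (R : realType) (m n : nat) (Smin Smax : R)
  (hm : (2 <= m)%N) (hn : (1 <= n)%N) (hS : Smin < Smax)
  (x : seq 'I_m) (hx : x \in Omega (Sval Smin Smax) n)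
  (alpha : R) (ha0 : 0 <= alpha) (ha1 : alpha < 1) :
  let Sv := Sval Smin Smax in
  exists v : R,
    is_min (Expect Sv @` Fset Sv n (OmegaT Sv n x) alpha) v /\
    is_min (Expect Sv @` FCset Sv (Cplus (Cof Sv x)) n (OmegaT Sv n x) alpha) v.
Proof.
cbv zeta.
set Sv := Sval Smin Smax.
set C := Cof Sv x.
set Om := OmegaT Sv n x.
have Hinv : forall u : n.-tuple 'I_m,
    Om (sortS Sv (map_tuple (phi C) u)) = Om (sortS Sv u).
  move=> u; rewrite /= (sortS_map hm hS _ (@phi_homo _ C)).
  rewrite /Om /OmegaT !inE.
  have -> : Omega Sv n (map (phi C) (sortS Sv u)).
    rewrite -(sortS_map hm hS _ (@phi_homo _ C)).
    exact: (Omega_sortS Smin Smax (map_tuple (phi C) u)).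
  rewrite Omega_sortS /=; apply: lexle_map => a b ax.
  have Ca : C a by apply/hasP; exists a.
  have [e1 e2] := phi_cmp b Ca.
  by rewrite !(Sv_eq hm hS) !(Sv_lt hm hS) e1 e2.
have pushG : forall F, Gset Sv n Om alpha F -> GCset Sv (Cplus C) n Om alpha (push C F).
  move=> F [sF pF]; split; first exact: push_FC.
  by split; [exact: push_simplex | rewrite push_prob].
have pushF : forall F, Fset Sv n Om alpha F -> FCset Sv (Cplus C) n Om alpha (push C F).
  move=> F [cF sF]; split; last exact: push_simplex.
  apply: (@closureS _ (push C @` Gset Sv n Om alpha)).
    by move=> _ [G hG <-]; exact: pushG.
  by apply: closure_img cF; exact: push_cont.
have FCsub : FCset Sv (Cplus C) n Om alpha `<=` Fset Sv n Om alpha.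
  move=> F [cF sF]; split => //; apply: closureS cF => G [_ hG]; exact: hG.
have m0 : (0 < m)%N := ltn_trans (isT : (0 < 1)%N) hm.
have tlt : (m.-1 < m)%N by rewrite ltn_predL.
pose top : 'I_m := Ordinal tlt.
have Stop : forall a : 'I_m, Sv a <= Sv top.
  by move=> a; rewrite (Sv_le hm hS) /= -ltnS prednK.
pose F0 : 'rV[R]_m := \row_k (if k == top then 1 else 0).
have sF0 : simplex F0.
  split.
    by move=> k; rewrite mxE; case: ifP.
  rewrite (bigD1 top) //= mxE eqxx big1 ?addr0 // => k /negbTE.
  by rewrite mxE => ->.
have snseq : forall k, sorted (valle Sv) (nseq k top).
  elim=> [|k IH] //=; case: k IH => //= k ->.
  by rewrite /valle lexx.
have lx : forall (y : seq 'I_m) k, lexle Sv y (nseq k top).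
  elim=> [|a y IH] [|k] //=.
  case: eqP => [_|ne]; first exact: IH.
  by rewrite lt_neqAle Stop andbT; apply/eqP.
have GF0 : Gset Sv n Om alpha F0.
  split => //.
  apply: (lt_le_trans ha1).
  rewrite /prob (bigD1 [tuple of nseq n top]) /=; last first.
    rewrite /sortS sorted_sort; last exact: snseq.
      by rewrite /Om /OmegaT !inE /Omega inE size_nseq eqxx snseq lx.
    exact: valle_trans.
  rewrite big1 => [|i _]; last by rewrite tnth_nseq mxE eqxx.
  rewrite lerDl sumr_ge0 // => t _; apply: prodr_ge0 => i _; exact: sF0.1.
pose box := [set v : 'rV[R]_m | forall i, `[0, 1]%classic (v ord0 i)].
have box_c : compact box.
  have := @rV_compact R m (fun=> `[0, 1]%classic) (fun=> @segment_compact R 0 1). move=> H. exact H.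
have simp_box : @simplex R m `<=` box.
  move=> F [F0p F1] i /=; rewrite in_itv /= F0p /= -F1 (bigD1 i) //= lerDl.
  by rewrite sumr_ge0.
pose sumset := [set F : 'rV[R]_m | \sum_k F ord0 k * 1 = 1].
have sum_cl : closed sumset.
  have H := proj1 (continuous_closedP (fun F : 'rV[R]_m => \sum_k F ord0 k * 1)) (@lin_cont R m (fun _ => 1)) [set x : R | x = 1] (@closed_eq R 1).
  exact: H.
have simplex_cl : closed (@simplex R m).
  have -> : @simplex R m = box `&` sumset.
    apply/seteqP; split => F.
      move=> sF; split; first exact: simp_box.
      by rewrite /sumset /=; under eq_bigr do rewrite mulr1; exact: sF.2.
    move=> [hb hs]; split.
      by move=> k; have := hb k; rewrite /= in_itv /= => /andP[].
    by move: hs; rewrite /sumset /=; under eq_bigr do rewrite mulr1.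
  exact: closedI (compact_closed (@norm_hausdorff _ _) box_c) sum_cl.
have Fcl : closed (Fset Sv n Om alpha) := closedI (@closed_closure _ _) simplex_cl.
have Fc : compact (Fset Sv n Om alpha).
  apply: (subclosed_compact Fcl box_c) => F [_ sF]; exact: simp_box.
have ne : Fset Sv n Om alpha !=set0.
  by exists F0; split => //; exact: subset_closure.
have [F1 F1in F1min] := compact_EVT_min ne Fc (continuous_subspaceT (@lin_cont R m Sv)).
have F1F := set_mem F1in.
have le1 := push_E hm hS C F1F.2.
have ge1 : Expect Sv F1 <= Expect Sv (push C F1).
  by apply: F1min; apply: mem_set; apply: FCsub; exact: pushF.
exists (Expect Sv F1); split.
  split; first by exists F1.
  by move=> _ [G hG <-]; apply: F1min; apply: mem_set.
split.
  exists (push C F1); first exact: pushF.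
  by apply/le_anti; rewrite le1 ge1.
by move=> _ [G hG <-]; apply: F1min; apply: mem_set; exact: FCsub.
Qed.
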